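(* Let $R$ be an associative unital algebra over a field $k$, let $P(t)\in R[t]$ be a monic polynomial of degree $n$ ($t$ central), and let $S$ be a set of pseudo-roots of $P(t)$ containing elements $a_1,\dots,a_n$ with $P(t)=(t-a_1)(t-a_2)\cdots(t-a_n)$. Let $\Gamma=\Gamma(P,S)$ be the graph of right divisors and $\mathcal P(t)\in A(\Gamma)[t]$ the associated polynomial. Then there is a canonical algebra homomorphism $\alpha:A(\Gamma)\to R$, sending the edge from $(t-a)B(t)$ to $B(t)$ to $a$, such that the induced homomorphism $\hat\alpha:A(\Gamma)[t]\to R[t]$ maps $\mathcal P(t)$ to $P(t)$.
   Context: An element $x\in R$ is a pseudo-root of $P(t)$ if $P(t)=Q_1(t)(t-x)Q_2(t)$ for some $Q_1,Q_2\in R[t]$. The graph $\Gamma(P,S)$: its vertices are the monic polynomials $B(t)\in R[t]$ of degree between $0$ and $n$ such that $P(t)=Q(t)B(t)$ for some $Q(t)\in R[t]$; there is an edge from $B_1(t)$ to $B_2(t)$ (tail $B_1$, head $B_2$) whenever $B_1(t)=(t-x)B_2(t)$ for some $x\in S$. For a directed graph $\Gamma=(V,E)$ (each edge $e$ has tail $t(e)$ and head $h(e)$; a directed path is $e_1,\dots,e_k$ with $t(e_{i+1})=h(e_i)$), $A(\Gamma)$ is the quotient of the free associative $k$-algebra on $E$ by the relations that for any two directed paths $(e_1,\dots,e_k)$, $(e'_1,\dots,e'_l)$ with common origin and common terminus, $(t-e_1)\cdots(t-e_k)=(t-e'_1)\cdots(t-e'_l)$ coefficientwise. Here $\mathcal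 P(t)=(t-f_1)\cdots(t-f_m)\in A(\Gamma)[t]$ for any directed path $(f_1,\dots,f_m)$ in $\Gamma(P,S)$ from the vertex $P(t)$ to the vertex $1$ (such a path exists and $\mathcal P(t)$ does not depend on its choice). *)

(* Defs.v *)
From mathcomp Require Import all_boot all_algebra.
Set Implicit Arguments. Unset Strict Implicit. Unset Printing Implicit Defensive.
Import GRing.Theory.
Local Open Scope ring_scope.

Section Graph.
Variables (k : fieldType) (R : algType k) (P : {poly R}) (S : R -> Prop).

Definition pseudo_root (x : R) : Prop :=
  exists Q1 Q2 : {poly R}, P = Q1 * ('X - x%:P) * Q2.

(* Vertices of Gamma(P,S): monic right divisors of P of degree between 0 and
   deg P (size B = deg B + 1). *)
Definition gvertex (B : {poly R}) : Prop :=
  [/\ B \is monic, (size B <= size P)%N & exists Q : {poly R}, P = Q * B].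

Definition is_gedge (e : {poly R} * {poly R} * R) : Prop :=
  let: (B1, B2, x) := e in
  [/\ gvertex B1, gvertex B2, S x & B1 = ('X - x%:P) * B2].

Definition gedge := {e : {poly R} * {poly R} * R | is_gedge e}.

Definition etail (e : gedge) : {poly R} := (sval e).1.1.
Definition ehead (e : gedge) : {poly R} := (sval e).1.2.
Definition elabel (e : gedge) : R := (sval e).2.

Fixpoint dpath (u : {poly R}) (p : seq gedge) (v : {poly R}) : Prop :=
  match p with
  | [::] => u = v
  | e :: p' => etail e = u /\ dpath (ehead e) p' v
  end.

Definition path_poly (A : algType k) (f : gedge -> A) (p : seq gedge) : {poly A} :=
  \prod_(e <- p) ('X - (f e)%:P).

Definition gamma_relations (A : algType k) (f : gedge -> A) : Prop :=
  forall (u v : {poly R}) (p q : seq gedge),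
    dpath u p v -> dpath u q v -> path_poly f p = path_poly f q.

(* (A, iota) is the algebra A(Gamma) presented by generators E and the relations
   above, characterized up to unique isomorphism by its universal property:
   every assignment of the generators in a k-algebra B satisfying the relations
   extends to a unique k-algebra homomorphism A -> B. *)
Definition is_A_Gamma (A : algType k) (iota : gedge -> A) : Prop :=
  gamma_relations iota /\
  forall (B : algType k) (g : gedge -> B), gamma_relations g ->
    exists h : {lrmorphism A -> B},
      (forall e, h (iota e) = g e) /\
      (forall h' : {lrmorphism A -> B}, (forall e, h' (iota e) = g e) ->
         forall a, h' a = h a).

End Graph.

(* Main.v *)
Require Import Defs.
From mathcomp Require Import all_boot all_algebra.
Import GRing.Theory.
Local Open Scope ring_scope.

Section Aux.
Variables (k : fieldType) (R : algType k) (P : {poly R}) (S : R -> Prop).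

Lemma dpath_eq u p v : @dpath k R P S u p v ->
  u = path_poly (@elabel k R P S) p * v.
Proof.
elim: p u => [|e p IH] u /=; first by move=> ->; rewrite /path_poly big_nil mul1r.
move=> [He Hp]; rewrite /path_poly big_cons -mulrA -(IH _ Hp) -He.
by case: e {He Hp} => [[[B1 B2] x] [? ? ? E]].
Qed.

Lemma dpath_end u p v : @dpath k R P S u p v -> p = [::] \/ v \is monic.
Proof.
elim: p u => [|e p IH] u /=; first by left.
move=> [_ Hp]; right; case: (IH _ Hp) => // Hnil; move: Hp; rewrite Hnil /= => <-.
by case: e => [[[B1 B2] x] [? [] ]].
Qed.

Lemma rel_elabel : gamma_relations (@elabel k R P S).
Proof.
move=> u v p q Hp Hq.
have Ep := dpath_eq _ _ _ Hp; have Eq := dpath_eq _ _ _ Hq.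
case: (dpath_end _ _ _ Hp) => [Pn|Mv].
  case: (dpath_end _ _ _ Hq) => [Qn|Mv]; first by rewrite Pn Qn.
  apply/eqP; rewrite -subr_eq0; apply/eqP.
  set d := _ - _; have : d * v = 0 by rewrite mulrBl -Ep -Eq subrr.
  have [->//|nz] := eqVneq d 0.
  move=> E0; have := congr1 (fun r : {poly R} => size r) E0 => /=; rewrite size_Mmonic // size_poly0.
  have := monic_neq0 Mv; rewrite -size_poly_gt0.
  case: (size v) => // m _; rewrite addnS /=.
  by move: nz; rewrite -size_poly_gt0; case: (size d).
apply/eqP; rewrite -subr_eq0; apply/eqP.
set d := _ - _; have : d * v = 0 by rewrite mulrBl -Ep -Eq subrr.
have [->//|nz] := eqVneq d 0.
move=> E0; have := congr1 (fun r : {poly R} => size r) E0 => /=; rewrite size_Mmonic // size_poly0.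
have := monic_neq0 Mv; rewrite -size_poly_gt0.
case: (size v) => // m _; rewrite addnS /=.
by move: nz; rewrite -size_poly_gt0; case: (size d).
Qed.

End Aux.

Theorem theorem2p5p1 (k : fieldType) (R : algType k) (n : nat) (P : {poly R})
  (S : R -> Prop) (a : 'I_n -> R)
  (HPmonic : P \is monic) (HPsize : size P = n.+1)
  (HS : forall x, S x -> pseudo_root P x)
  (HaS : forall i, S (a i))
  (HPa : P = \prod_(i < n) ('X - (a i)%:P))
  (A : algType k) (iota : gedge P S -> A) (HA : is_A_Gamma iota) :
  (exists p : seq (gedge P S), @dpath k R P S P p 1) /\
  exists alpha : {lrmorphism A -> R},
    (forall e : gedge P S, alpha (iota e) = elabel e) /\
    (forall p : seq (gedge P S), @dpath k R P S P p 1 ->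
       map_poly alpha (path_poly iota p) = P).
Proof.
split.
  pose s := [seq a i | i <- enum 'I_n].
  have HP : P = \prod_(x <- s) ('X - x%:P).
    by rewrite HPa big_map enumT unlock /index_enum unlock.
  have Ss : size s = n by rewrite size_map size_enum_ord.
  have inS : forall x, x \in s -> S x by move=> x /mapP [i _ ->].
  have vert : forall u t, s = u ++ t -> gvertex P (\prod_(x <- t) ('X - x%:P)).
    move=> u t st; split; first exact: monic_prod_XsubC.
      by rewrite HPsize size_prod_XsubC ltnS -Ss st size_cat leq_addl.
    by exists (\prod_(x <- u) ('X - x%:P)); rewrite HP st big_cat.
  suff H : forall t, (exists u, s = u ++ t) ->
      exists p, @dpath k R P S (\prod_(x <- t) ('X - x%:P)) p 1.
    have [p Hp] := H s (ex_intro _ [::] erefl).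
    by exists p; move: Hp; rewrite -HP.
  elim=> [|x t IH] [u st].
    by exists [::]; rewrite big_nil.
  have [p Hp] : exists p, @dpath k R P S (\prod_(y <- t) ('X - y%:P)) p 1.
    by apply: IH; exists (rcons u x); rewrite cat_rcons.
  have He : @is_gedge k R P S (\prod_(y <- x :: t) ('X - y%:P), \prod_(y <- t) ('X - y%:P), x).
    split; first exact: (vert u).
    - by apply: (vert (rcons u x)); rewrite cat_rcons.
    - by apply: inS; rewrite st mem_cat in_cons eqxx orbT.
    - by rewrite big_cons.
  by exists (exist _ _ He :: p).
have [h [Hh _]] := (proj2 HA) R (@elabel k R P S) (@rel_elabel k R P S).
exists h; split => // p Hp.
rewrite /path_poly rmorph_prod.
rewrite (eq_bigr (fun e => 'X - (elabel e)%:P)); last by move=> e _; rewrite /= map_polyXsubC -Hh.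
by rewrite [RHS](@dpath_eq k R P S _ _ _ Hp) mulr1.
Qed.
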